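(* Let $\mathcal{G}^{c}=(\mathbb{C},\mathbb{E}^{c})$ be a C-DMG over DMGs, let $\mathbb{C}_X,\mathbb{C}_Y,\mathbb{C}_W$ be pairwise disjoint subsets of $\mathbb{C}$, and set $X=\bigcup_{C\in\mathbb{C}_X}C$, $Y=\bigcup_{C\in\mathbb{C}_Y}C$, $W=\bigcup_{C\in\mathbb{C}_W}C$. If $\mathbb{C}_X$ and $\mathbb{C}_Y$ are not $\sigma$-separated by $\mathbb{C}_W$ in $\mathcal{G}^{c}$, then there exists a DMG $\mathcal{G}=(\mathbb{V},\mathbb{E})$ compatible with $\mathcal{G}^{c}$ in which $X$ and $Y$ are not $\sigma$-separated by $W$.
   Context: A directed mixed graph (DMG) $\mathcal{G}=(\mathbb{V},\mathbb{E})$ has directed edges $\to$ and bidirected edges $\leftrightarrow$, cycles allowed; the DMGs considered are those induced by input/output structural causal models (ioSCMs, Forré–Mooij 2020): vertices are the endogenous and input variables, $U\to V$ if $U$ is an argument of the causal mechanism of $V$, and $U\leftrightarrow V$ if some latent variable is a parent of both. A C-DMG over DMGs $\mathcal{G}^c=(\mathbb{C},\mathbb{E}^c)$ is obtained from such a DMG $\mathcal{G}=(\mathbb{V},\mathbb{E})$ as follows: $\mathbb{C}$ is a partition of $\mathbb{V}$ into nonempty clusters, and for all $C_i,C_j\in\mathbb{C}$ (possibly equal) the edge $C_i\to C_j$ (resp. $C_i\leftrightarrow C_j$) is in $\mathbb{E}^c$ iff there exist $V_i\in C_i,V_j\in C_j$ with $V_i\to V_j$ (resp. $V_i\leftrightarrow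 V_j$) in $\mathbb{E}$; such $\mathcal{G}$ is called compatible with $\mathcal{G}^c$. In any such graph, ancestors and descendants include the vertex itself, and the strongly connected component of $V$ is $\mathrm{Sc}(V)=\mathrm{Anc}(V)\cap\mathrm{Desc}(V)$. Write $A\mathbin{*\!\!\to} B$ for an edge $A\to B$ or $A\leftrightarrow B$, and $A\mathbin{\leftarrow\!\!*} B$ for $A\leftarrow B$ or $A\leftrightarrow B$. A walk $\langle V_1,\dots,V_n\rangle$ is $\sigma$-blocked by a set $W$ if: (1) $V_1\in W$ or $V_n\in W$; or (2) for some $1<i<n$, $V_{i-1}\mathbin{*\!\!\to}V_i\mathbin{\leftarrow\!\!*}V_{i+1}$ on the walk and $V_i\notin W$; or (3) for some $1<i<n$, $V_{i-1}\leftarrow V_i\mathbin{\leftarrow\!\!*}V_{i+1}$ on the walk and $V_i\in W\setminus \mathrm{Sc}(V_{i-1})$; or (4) for some $1<i<n$, $V_{i-1}\mathbin{*\!\!\to}V_i\to V_{i+1}$ on the walk and $V_i\in W\setminus\mathrm{Sc}(V_{i+1})$; or (5) for some $1<i<n$, $V_{i-1}\leftarrow V_i\to V_{i+1}$ on the walk and $V_i\in W\setminus(\mathrm{Sc}(V_{i-1})\cap\mathrm{Sc}(V_{i+1}))$. For disjoint vertex sets $X,Y,W$, $W$ $\sigma$-separates $X$ and $Y$ if every walk from a vertex of $X$ to a vertex of $Y$ is $\sigma$-blocked by $W$. *)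

(* Defs.v *)
From mathcomp Require Import all_boot.
Set Implicit Arguments. Unset Strict Implicit. Unset Printing Implicit Defensive.

(* A directed mixed graph on a finite vertex type T is given by a relation
   [dir] (u -> v iff dir u v) and a relation [bi] (u <-> v iff bi u v). *)

(* Edge marks along a walk, relative to consecutive vertices a, b:
   Fwd : a -> b,  Bwd : a <- b,  Bid : a <-> b. *)
Inductive mark := Fwd | Bwd | Bid.

Section Walks.
Variables (T : finType) (dir bi : rel T).

Definition edge_ok (e : mark) (a b : T) : bool :=
  match e with Fwd => dir a b | Bwd => dir b a | Bid => bi a b end.

Fixpoint is_walk (x : T) (s : seq (mark * T)) : bool :=
  match s with
  | [::] => true
  | (e, y) :: s' => edge_ok e x y && is_walk y s'
  end.

Definition walk_end (x : T) (s : seq (mark * T)) : T := last x (map snd s).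

Definition Sc (v : T) : pred T := [pred u | connect dir u v && connect dir v u].

(* arrowhead at the middle vertex from the left / right edge *)
Definition head_left (e : mark) : bool := match e with Bwd => false | _ => true end.
Definition head_right (e : mark) : bool := match e with Fwd => false | _ => true end.
Definition tail_left (e : mark) : bool := match e with Bwd => true | _ => false end.
Definition tail_right (e : mark) : bool := match e with Fwd => true | _ => false end.

Variable W : {set T}.

Definition triple_blocked (a : T) (e1 : mark) (b : T) (e2 : mark) (c : T) : bool :=
  [|| head_left e1 && head_right e2 && (b \notin W),
      tail_left e1 && head_right e2 && (b \in W) && (b \notin Sc a),
      head_left e1 && tail_right e2 && (b \in W) && (b \notin Sc c)
    | tail_left e1 && tail_right e2 && (b \in W) && ~~ ((b \in Sc a) && (b \in Sc c))].

Fixpoint interior_blocked (x : T) (s : seq (mark * T)) : bool :=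
  match s with
  | (e1, y) :: (((e2, z) :: _) as s') =>
      triple_blocked x e1 y e2 z || interior_blocked y s'
  | _ => false
  end.

Definition sigma_blocked (x : T) (s : seq (mark * T)) : bool :=
  [|| x \in W, walk_end x s \in W | interior_blocked x s].

Definition sigma_separated (X Y : {set T}) : Prop :=
  forall (x : T) (s : seq (mark * T)),
    x \in X -> walk_end x s \in Y -> is_walk x s -> sigma_blocked x s.

End Walks.

(* DMGs induced by ioSCMs: bidirected edges are symmetric; no self-loops. *)
Definition is_DMG (V : finType) (dir bi : rel V) : Prop :=
  symmetric bi /\ irreflexive bi /\ irreflexive dir.

(* cluster graph induced by a partition given by the cluster map cl *)
Definition cluster_rel (V C : finType) (cl : V -> C) (e : rel V) : rel C :=
  fun c d => [exists u : V, exists v : V, [&& cl u == c, cl v == d & e u v]].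

Definition compatible (V C : finType) (cl : V -> C) (Edir Ebi : rel C)
    (dir bi : rel V) : Prop :=
  [/\ is_DMG dir bi, cluster_rel cl dir =2 Edir & cluster_rel cl bi =2 Ebi].

Definition is_CDMG (V C : finType) (cl : V -> C) (Edir Ebi : rel C) : Prop :=
  (forall c : C, exists v : V, cl v = c) /\
  exists dir bi : rel V, compatible cl Edir Ebi dir bi.

(* Main.v *)
Require Import Defs.
From mathcomp Require Import all_boot.

Set Implicit Arguments. Unset Strict Implicit. Unset Printing Implicit Defensive.

Definition liftR (V C : finType) (cl : V -> C) (E : rel C) : rel V :=
  fun u v => E (cl u) (cl v) && (u != v).

Definition img (V C : finType) (cl : V -> C) (t : seq (mark * V)) : seq (mark * C) :=
  map (fun p => (p.1, cl p.2)) t.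

Lemma two_distinct (V C : finType) (cl : V -> C) (E : rel C) (e0 : rel V) :
  irreflexive e0 -> cluster_rel cl e0 =2 E ->
  forall c d, E c d -> exists a b, [/\ cl a = c, cl b = d & a != b].
Proof.
move=> irr hE c d; rewrite -hE => /existsP[a /existsP[b /and3P[/eqP ha /eqP hb hab]]].
exists a, b; split=> //; apply/eqP=> eab; subst b; by rewrite irr in hab.
Qed.

Lemma pick_ne (V C : finType) (cl : V -> C) (surj : forall c, exists v, cl v = c)
  (u : V) (c1 : C) :
  (cl u != c1 \/ exists a b, [/\ cl a = c1, cl b = c1 & a != b]) ->
  exists w, cl w = c1 /\ w != u.
Proof.
case=> [hne | [a [b [ha hb hab]]]].
- have [w hw] := surj c1; exists w; split=> //; apply/eqP=> ewu; subst.
  by rewrite eqxx in hne.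
- case: (eqVneq a u) => [eau|hau].
  + subst a; exists b; split=> //; by rewrite eq_sym.
  + by exists a.
Qed.

Lemma step (V C : finType) (cl : V -> C) (E : rel C) (e0 : rel V)
  (irr : irreflexive e0) (hE : cluster_rel cl e0 =2 E)
  (surj : forall c, exists v, cl v = c) (u : V) (c1 : C) :
  E (cl u) c1 -> exists w, cl w = c1 /\ w != u.
Proof.
move=> h; have [a [b [ha hb hab]]] := two_distinct irr hE h.
apply: pick_ne => //; case: (eqVneq (cl u) c1) => e; last by left.
right; exists a, b; split=> //; by rewrite ha.
Qed.

Lemma stepB (V C : finType) (cl : V -> C) (E : rel C) (e0 : rel V)
  (irr : irreflexive e0) (hE : cluster_rel cl e0 =2 E)
  (surj : forall c, exists v, cl v = c) (u : V) (c1 : C) :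
  E c1 (cl u) -> exists w, cl w = c1 /\ w != u.
Proof.
move=> h; have [a [b [ha hb hab]]] := two_distinct irr hE h.
apply: pick_ne => //; case: (eqVneq (cl u) c1) => e; last by left.
right; exists a, b; split=> //; by rewrite hb.
Qed.

Lemma conn_lift (V C : finType) (cl : V -> C) (E : rel C) (e0 : rel V)
  (irr : irreflexive e0) (hE : cluster_rel cl e0 =2 E)
  (surj : forall c, exists v, cl v = c) :
  forall p c0 u v, path E c0 p -> p != [::] -> cl u = c0 -> cl v = last c0 p ->
  connect (liftR cl E) u v.
Proof.
elim=> [|c1 p IH] c0 u v //= /andP[h01 hp] _ hu hv.
case: p IH hp hv => [|c2 p] IH hp hv /=.
- case: (eqVneq u v) => [->|huv]; first exact: connect0.
  apply: connect1; by rewrite /liftR hu hv h01 huv.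
- have hh : E (cl u) c1 by rewrite hu.
  have [w [hw hwu]] := step irr hE surj hh.
  apply: (connect_trans (connect1 (_ : liftR cl E u w))).
    by rewrite /liftR hu hw h01 eq_sym hwu.
  by apply: (IH c1).
Qed.

Lemma connL (V C : finType) (cl : V -> C) (E : rel C) (e0 : rel V)
  (irr : irreflexive e0) (hE : cluster_rel cl e0 =2 E)
  (surj : forall c, exists v, cl v = c) u v :
  connect E (cl u) (cl v) -> cl u != cl v -> connect (liftR cl E) u v.
Proof.
case/connectP => p hp hl; case: p hp hl => [|c p] hp hl.
  by rewrite /= in hl; rewrite hl eqxx.
move=> _; exact: (conn_lift irr hE surj hp).
Qed.

Lemma conn_adj (V C : finType) (cl : V -> C) (E : rel C) (e0 : rel V)
  (irr : irreflexive e0) (hE : cluster_rel cl e0 =2 E)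
  (surj : forall c, exists v, cl v = c) a b :
  (liftR cl E a b || liftR cl E b a) -> connect E (cl a) (cl b) ->
  connect (liftR cl E) a b.
Proof.
case/orP => h hc; first exact: connect1.
case: (eqVneq (cl a) (cl b)) => e; last exact: (connL irr hE surj).
apply: connect1; move: h; rewrite /liftR e eq_sym => /andP[h1 h2].
by rewrite h1 h2.
Qed.

Lemma Sc_adj (V C : finType) (cl : V -> C) (E : rel C) (e0 : rel V)
  (irr : irreflexive e0) (hE : cluster_rel cl e0 =2 E)
  (surj : forall c, exists v, cl v = c) a b :
  (liftR cl E a b || liftR cl E b a) -> cl a \in Sc E (cl b) ->
  a \in Sc (liftR cl E) b.
Proof.
rewrite /Sc !inE => h /andP[h1 h2]; apply/andP; split.
  exact: (conn_adj irr hE surj).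
by apply: (conn_adj irr hE surj) => //; rewrite orbC.
Qed.

Lemma triple_transfer (V C : finType) (cl : V -> C) (Edir Ebi : rel C) (e0 : rel V)
  (irr : irreflexive e0) (hE : cluster_rel cl e0 =2 Edir)
  (surj : forall c, exists v, cl v = c) (CW : {set C}) u y z e1 e2 :
  edge_ok (liftR cl Edir) (liftR cl Ebi) e1 u y ->
  edge_ok (liftR cl Edir) (liftR cl Ebi) e2 y z ->
  triple_blocked (liftR cl Edir) (cl @^-1: CW) u e1 y e2 z ->
  triple_blocked Edir CW (cl u) e1 (cl y) e2 (cl z).
Proof.
move=> h1 h2.
have S1 : tail_left e1 -> cl y \in Sc Edir (cl u) -> y \in Sc (liftR cl Edir) u.
  case: e1 h1 => //= h1 _; apply: (Sc_adj irr hE surj); by rewrite h1.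
have S2 : tail_right e2 -> cl y \in Sc Edir (cl z) -> y \in Sc (liftR cl Edir) z.
  case: e2 h2 => //= h2 _; apply: (Sc_adj irr hE surj); by rewrite h2.
rewrite /triple_blocked inE.
move: S1 S2; case: e1 {h1}; case: e2 {h2} => /=;
case: (y \in Sc (liftR cl Edir) u); case: (y \in Sc (liftR cl Edir) z);
case: (cl y \in Sc Edir (cl u)); case: (cl y \in Sc Edir (cl z));
case: (cl y \in CW) => //=; move=> H1 H2; try (have := H1 isT isT); try (have := H2 isT isT); by [].
Qed.

Lemma interior_transfer (V C : finType) (cl : V -> C) (Edir Ebi : rel C) (e0 : rel V)
  (irr : irreflexive e0) (hE : cluster_rel cl e0 =2 Edir)
  (surj : forall c, exists v, cl v = c) (CW : {set C}) :
  forall t u, is_walk (liftR cl Edir) (liftR cl Ebi) u t ->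
  interior_blocked (liftR cl Edir) (cl @^-1: CW) u t ->
  interior_blocked Edir CW (cl u) (img cl t).
Proof.
elim=> [|[e1 y] t IH] u //=.
case: t IH => [|[e2 z] t] IH //=.
move=> /andP[h1 /andP[h2 hw]] /orP[hb|hb]; apply/orP.
  by left; apply: (triple_transfer irr hE surj h1 h2).
right; apply: (IH y) => //=; by rewrite h2 hw.
Qed.

Lemma lift_exists (V C : finType) (cl : V -> C) (Edir Ebi : rel C) (d0 b0 : rel V)
  (irrd : irreflexive d0) (hEd : cluster_rel cl d0 =2 Edir)
  (irrb : irreflexive b0) (hEb : cluster_rel cl b0 =2 Ebi)
  (surj : forall c, exists v, cl v = c) :
  forall s x u, is_walk Edir Ebi x s -> cl u = x ->
  exists t, is_walk (liftR cl Edir) (liftR cl Ebi) u t /\ img cl t = s.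
Proof.
elim=> [|[e c] s IH] x u /=; first by exists [::].
case/andP => he hw hu.
have [w [hw1 hwu]] : exists w, cl w = c /\ w != u.
  case: e he => /= he.
  - by apply: (step irrd hEd surj); rewrite hu.
  - by apply: (stepB irrd hEd surj); rewrite hu.
  - by apply: (step irrb hEb surj); rewrite hu.
have [t [ht1 ht2]] := IH c w hw hw1.
exists ((e, w) :: t); split; last by rewrite /= hw1 ht2.
rewrite /= ht1 andbT.
case: e he => /= he; rewrite /liftR hu hw1 he //= ?(eq_sym u w) //.
Qed.

Theorem theorem2 (V C : finType) (cl : V -> C) (Edir Ebi : rel C)
    (hC : is_CDMG cl Edir Ebi)
    (CX CY CW : {set C})
    (hXY : [disjoint CX & CY]) (hXW : [disjoint CX & CW]) (hYW : [disjoint CY & CW]) :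
  ~ sigma_separated Edir Ebi CW CX CY ->
  exists dir bi : rel V,
    compatible cl Edir Ebi dir bi /\
    ~ sigma_separated dir bi (cl @^-1: CW) (cl @^-1: CX) (cl @^-1: CY).
Proof.
move=> hns.
case: hC => surj [dir0 [bi0 [[hsym [hirrb hirrd]] hEd hEb]]].
have Ebs : forall c d, Ebi c d -> Ebi d c.
  move=> c d; rewrite -!hEb => /existsP[a /existsP[b /and3P[ha hb hab]]].
  apply/existsP; exists b; apply/existsP; exists a; by rewrite hb ha hsym.
exists (liftR cl Edir), (liftR cl Ebi); split.
  split; first split.
  - move=> a b; rewrite /liftR (eq_sym a b).
    by apply/andP/andP => -[h1 h2]; split => //; apply: Ebs.
  - split => a; by rewrite /liftR eqxx andbF.
  - move=> c d; apply/existsP/idP.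
      by case=> a /existsP[b /and3P[/eqP ha /eqP hb /andP[h _]]]; rewrite -ha -hb.
    move=> h; have [a [b [ha hb hab]]] := two_distinct hirrd hEd h.
    exists a; apply/existsP; exists b; by rewrite /liftR ha hb h hab !eqxx.
  - move=> c d; apply/existsP/idP.
      by case=> a /existsP[b /and3P[/eqP ha /eqP hb /andP[h _]]]; rewrite -ha -hb.
    move=> h; have [a [b [ha hb hab]]] := two_distinct hirrb hEb h.
    exists a; apply/existsP; exists b; by rewrite /liftR ha hb h hab !eqxx.
move=> Hv; apply: hns => x s hx hend hw.
have [u hu] := surj x.
have [t [ht himg]] := lift_exists hirrd hEd hirrb hEb surj hw hu.
have hend' : cl (walk_end u t) = walk_end x s.
  rewrite /walk_end -himg -hu /img -map_comp.
  have -> : [seq (snd \o (fun p : mark * V => (p.1, cl p.2))) i | i <- t]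
            = map cl (map snd t) by rewrite -map_comp.
  by rewrite last_map.
have := Hv u t _ _ ht.
rewrite /sigma_blocked !inE hu hend' hx hend => /(_ isT isT) /or3P[h|h|h];
  apply/or3P; [exact: Or31 | exact: Or32 | apply: Or33].
rewrite -himg -hu; exact: (interior_transfer hirrd hEd surj ht h).
Qed.
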